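(* Let $1\le s<t\le n$ and $0<m<\binom{n}{s}$, and let $m+1=\sum_{k=0}^{\ell-1}\binom{n_{s-k}}{s-k}$ be the $s$-cascade representation of $m+1$ (of length $\ell$). Then $k^t_s(m+1)>k^t_s(m)$ if and only if $t\le\ell+n_{s-\ell+1}-1$.
   Context: Colex order on finite subsets of $\mathbb N$: $A<B$ iff $\max(A\triangle B)\in B$. $\mathbb C^{(s)}(m)$ is the $s$-graph whose edges are the first $m$ $s$-subsets of $\mathbb N$ in colex order, and $k^t_s(m)$ is the number of $t$-sets all of whose $s$-subsets are edges of $\mathbb C^{(s)}(m)$. A strict $s$-cascade is an integer sequence $n_s>n_{s-1}>\dots>n_{s-\ell+1}$ with $0\le\ell\le s$ and $n_{s-k}\ge s-k$ for all $k$; every $m\ge0$ has a unique representation $m=\sum_{k=0}^{\ell-1}\binom{n_{s-k}}{s-k}$ by a strict $s$-cascade (its $s$-cascade representation, of length $\ell$). *)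

(* Defs.v *)
From mathcomp Require Import all_boot.
Unset Printing Implicit Defensive.

(* Finite subsets of {0,...,N-1}; N is a "universe" bound. *)

Definition colex_lt (N : nat) (A B : {set 'I_N}) : bool :=
  [exists x in B :\: A, [forall y in (A :\: B) :|: (B :\: A), (y <= x)%N]].

(* A is an edge of C^(s)(m): A is an s-set among the first m s-sets in colex
   order, i.e. fewer than m s-sets precede it. *)
Definition colex_edge (N s m : nat) (A : {set 'I_N}) : bool :=
  (#|A| == s) && (#|[set B : {set 'I_N} | (#|B| == s) && colex_lt N B A]| < m).

Definition kts (N s t m : nat) : nat :=
  #|[set K : {set 'I_N} | (#|K| == t) &&
      [forall A : {set 'I_N}, ((A \subset K) && (#|A| == s)) ==> colex_edge N s m A]]|.

(* c = [:: n_s; n_{s-1}; ...; n_{s-l+1}] is a strict s-cascade representing m. *)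
Definition cascade_rep (s m : nat) (c : seq nat) : Prop :=
  [/\ size c <= s,
      sorted (fun a b => b < a) c,
      forall k, k < size c -> s - k <= nth 0 c k
    & m = \sum_(k < size c) 'C(nth 0 c k, s - k)].

(* Main.v *)
Require Import Defs.
From mathcomp Require Import all_boot.
From mathcomp Require Import zify.
Set Implicit Arguments. Unset Strict Implicit.

Definition wt {N} (A : {set 'I_N}) : nat := \sum_(i in A) 2 ^ (val i).
Definition rk {N} s (A : {set 'I_N}) : nat :=
  #|[set B : {set 'I_N} | (#|B| == s) && (wt B < wt A)]|.

Lemma wtD1 N (A : {set 'I_N}) (y : 'I_N) : y \in A -> wt A = 2 ^ y + wt (A :\ y).
Proof. by move=> yA; rewrite /wt (big_setD1 _ yA). Qed.

Lemma wt_ge N (A : {set 'I_N}) (y : 'I_N) : y \in A -> 2 ^ y <= wt A.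
Proof. by move=> /wtD1 ->; apply: leq_addr. Qed.
Arguments wtD1 {N A y}.
Arguments wt_ge {N A y}.

Lemma wt_lt N x : forall (S : {set 'I_N}), (forall y, y \in S -> val y < x) -> wt S < 2 ^ x.
Proof.
elim: x => [|x IH] S HS.
  have -> : S = set0.
    by apply/setP => y; rewrite inE; apply/negP => /HS.
  by rewrite /wt big_set0.
case: (pickP (fun y => (y \in S) && (val y == x))) => [y /andP[yS /eqP yx]|H].
  rewrite (wtD1 yS) expnS yx.
  have : wt (S :\ y) < 2 ^ x.
    apply: IH => z; rewrite !inE => /andP[zy zS].
    have := HS _ zS; rewrite ltnS leq_eqVlt => /orP[/eqP zx|//].
    by case/negP: zy; apply/eqP/val_inj; rewrite /= zx yx.
  by move=> h; rewrite mul2n -addnn ltn_add2l.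
have : wt S < 2 ^ x.
  apply: IH => z zS; have := HS _ zS; rewrite ltnS leq_eqVlt => /orP[/eqP zx|//].
  by have := H z; rewrite zS zx eqxx.
rewrite expnS mul2n -addnn => h; exact: ltn_addr.
Qed.

Lemma colex_wt N (A B : {set 'I_N}) : colex_lt N A B -> wt A < wt B.
Proof.
case/existsP => x /andP[xBA /forallP H].
rewrite /wt (big_setID (A := A) B) (big_setID (A := B) A) /= setIC.
rewrite ltn_add2l.
apply: (@leq_trans (2 ^ x)); last by apply: (wt_ge xBA).
apply: wt_lt => y yAB.
have := H y; rewrite inE yAB /=.
rewrite leq_eqVlt => /orP[/eqP yx|//].
move: xBA yAB; rewrite !inE => /andP[xA _] /andP[_ yA].
have e : y = x by apply: val_inj; rewrite /= yx.
by move: xA; rewrite -e yA.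
Qed.

Lemma colex_total N (A B : {set 'I_N}) : A != B -> colex_lt N A B || colex_lt N B A.
Proof.
move=> neq.
have [y yD] : exists y, y \in (A :\: B) :|: (B :\: A).
  case: (pickP (fun y => (y \in A) != (y \in B))) => [y Hy|H].
    by exists y; rewrite !inE; move: Hy; case: (y \in A); case: (y \in B).
  case/negP: neq; apply/eqP/setP => z; have := H z; by case: (z \in A); case: (z \in B).
case: (arg_maxnP (fun i : 'I_N => val i) yD) => x xD Hx.
have : x \in (A :\: B) :|: (B :\: A) := xD.
case/setUP => [xAB|xBA].
  apply/orP; right; apply/existsP; exists x; rewrite xAB /=; apply/forallP => z.
  by apply/implyP => zD; apply: Hx; rewrite setUC.
apply/orP; left; apply/existsP; exists x; rewrite xBA /=; apply/forallP => z.
by apply/implyP => zD; apply: Hx.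
Qed.

Lemma wt_inj N (A B : {set 'I_N}) : wt A = wt B -> A = B.
Proof.
move=> e; apply/eqP; apply: contraT => neq.
by case/orP: (colex_total neq) => /colex_wt; rewrite e ltnn.
Qed.

Lemma colexE N (A B : {set 'I_N}) : colex_lt N A B = (wt A < wt B).
Proof.
apply/idP/idP; first exact: colex_wt.
move=> lt; have neq : A != B by apply: contraTneq lt => ->; rewrite ltnn.
case/orP: (colex_total neq) => // /colex_wt; lia.
Qed.

Lemma rk_lt N s (A B : {set 'I_N}) : #|A| = s -> wt A < wt B -> rk s A < rk s B.
Proof.
move=> cA lt; apply: proper_card; apply/properP; split.
  apply/subsetP => X; rewrite !inE => /andP[-> h] /=; lia.
by exists A; rewrite !inE cA eqxx //= ltnn.
Qed.

Lemma rk_le N s (A B : {set 'I_N}) : wt A <= wt B -> rk s A <= rk s B.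
Proof.
move=> le; apply: subset_leq_card; apply/subsetP => X; rewrite !inE => /andP[-> h] /=; lia.
Qed.

Lemma card_le_bound N (S : {set 'I_N}) x : (forall y, y \in S -> val y < x) -> #|S| <= x.
Proof.
move=> H; rewrite cardE -(size_map val) -[x](size_iota 0).
apply: uniq_leq_size; first by rewrite (map_inj_uniq val_inj) enum_uniq.
by move=> z /mapP[y]; rewrite mem_enum => yS ->; rewrite mem_iota add0n H.
Qed.

Lemma card_low N x : x <= N -> #|[set y : 'I_N | val y < x]| = x.
Proof.
move=> xN; apply/eqP; rewrite eqn_leq card_le_bound; last by move=> y; rewrite inE.
rewrite cardE -(size_map val) -{1}[x](size_iota 0).
apply: uniq_leq_size; first exact: iota_uniq.
move=> i; rewrite mem_iota add0n => ix; apply/mapP.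
have iN : i < N by lia.
by exists (Ordinal iN); rewrite // mem_enum inE.
Qed.

Lemma rk_rec N s (A : {set 'I_N}) (x : 'I_N) : 0 < s -> x \in A ->
  (forall y, y \in A -> val y <= val x) -> rk s A = 'C(x, s) + rk s.-1 (A :\ x).
Proof.
move=> s0 xA Hmax.
have wA : wt A < 2 ^ x.+1 by apply: wt_lt => y /Hmax.
have wA' : wt (A :\ x) < 2 ^ x.
  apply: wt_lt => y; rewrite !inE => /andP[yx /Hmax].
  rewrite leq_eqVlt => /orP[/eqP e|//]; by case/negP: yx; apply/eqP/val_inj.
rewrite /rk -(cardsID [set B : {set 'I_N} | x \in B]) addnC; congr (_ + _).
  rewrite -(card_low (ltnW (ltn_ord x))) -cards_draws; apply: eq_card => B.
  rewrite !inE; apply/idP/idP.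
    case/andP=> xB /andP[cB wB]; rewrite cB andbT; apply/subsetP => y yB.
    rewrite inE ltn_neqAle; apply/andP; split.
      by apply: contraNneq xB => e; have -> : x = y by apply: val_inj.
    rewrite leqNgt; apply/negP => xy.
    have := wt_ge yB; have : 2 ^ x.+1 <= 2 ^ y by rewrite leq_exp2l.
    lia.
  case/andP=> /subsetP sB cB; rewrite cB /=; apply/andP; split.
    by apply/negP => /sB; rewrite inE ltnn.
  apply: (@leq_trans (2 ^ x)); last exact: wt_ge xA.
  by apply: wt_lt => y /sB; rewrite inE.
set P := _ :&: _.
have inj : {in P &, injective (fun B : {set 'I_N} => B :\ x)}.
  move=> B1 B2; rewrite !inE => /andP[_ x1] /andP[_ x2] e.
  by rewrite -(setD1K x1) -(setD1K x2) e.
rewrite -(card_in_imset inj); apply: eq_card => B'.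
rewrite inE; apply/imsetP/idP.
  case=> B; rewrite !inE => /andP[/andP[cB wB] xB] ->.
  rewrite (cardsD1 x B) xB in cB; move/eqP: cB => cB.
  rewrite -cB /= eqxx /=.
  move: wB; rewrite (wtD1 xB) (wtD1 xA) ltn_add2l //.
case/andP => cB' wB'.
have xB' : x \notin B'.
  apply/negP => xB'; have := wt_ge xB'; lia.
exists (x |: B'); last by rewrite setU1K.
rewrite !inE eqxx andbT cardsU1 xB' (eqP cB') /= add1n prednK // eqxx /=.
rewrite (wtD1 (setU11 x B')) (wtD1 xA) setU1K // ltn_add2l //.
Qed.

Lemma rk_int N y : forall s, y + s <= N ->
  #|[set z : 'I_N | y <= z < y + s]| = s /\
  rk s [set z : 'I_N | y <= z < y + s] = 'C(y + s, s) - 1.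
Proof.
elim => [|s IH] hN.
  have -> : [set z : 'I_N | y <= z < y + 0] = set0.
    by apply/setP => z; rewrite !inE addn0; apply/negP => /andP[a b]; lia.
  split; first by rewrite cards0.
  rewrite bin0 subnn; apply/eqP; rewrite cards_eq0; apply/eqP/setP => B.
  by rewrite !inE /wt big_set0 ltn0 andbF.
have [c1 r1] : _ /\ _ := IH ltac:(lia).
have xN : y + s < N by lia.
set x : 'I_N := Ordinal xN.
have E : [set z : 'I_N | y <= z < y + s.+1] = x |: [set z : 'I_N | y <= z < y + s].
  apply/setP => z; rewrite !inE addnS ltnS; apply/idP/orP.
    case/andP=> a; rewrite leq_eqVlt => /orP[/eqP e|b]; first by left; apply/eqP/val_inj.
    by right; rewrite a b.
  case=> [/eqP -> /=|/andP[a b]]; last by rewrite a ltnW.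
  by rewrite leq_addr leqnn.
have xn : x \notin [set z : 'I_N | y <= z < y + s] by rewrite inE /= ltnn andbF.
rewrite E cardsU1 xn c1; split => //.
rewrite (@rk_rec _ _ _ x) //; last first.
  - by move=> z; rewrite -E inE => /andP[_]; rewrite /= addnS ltnS.
  - exact: setU11.
rewrite setU1K // r1 /= addnS binS.
have : 0 < 'C(y + s, s) by rewrite bin_gt0 leq_addl.
lia.
Qed.

Fixpoint Epred (s : nat) (c : seq nat) (z : nat) : bool :=
  match c with
  | [::] => false
  | x :: c' => if c' is [::] then (x - s <= z) && (z < x)
               else (z == x) || Epred s.-1 c' z
  end.

Definition Eset N s c : {set 'I_N} := [set z : 'I_N | Epred s c z].

Definition casc s c := [/\ size c <= s, sorted (fun a b => b < a) c &
  forall k, k < size c -> s - k <= nth 0 c k].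

Definition csum s c := \sum_(k < size c) 'C(nth 0 c k, s - k).

Lemma casc_tail s x c : casc s (x :: c) -> casc s.-1 c.
Proof.
case=> /= sz srt H; split.
- lia.
- exact: path_sorted srt.
- move=> k kc; have := H k.+1 kc; rewrite /=; lia.
Qed.

Lemma casc_head s x c : casc s (x :: c) -> s <= x.
Proof. by case=> _ _ H; have := H 0 isT; rewrite subn0. Qed.

Lemma casc_s s x c : casc s (x :: c) -> 0 < s.
Proof. by case=> /= sz _ _; lia. Qed.

Lemma csum_cons s x c : csum s (x :: c) = 'C(x, s) + csum s.-1 c.
Proof.
rewrite /csum /= big_ord_recl /= subn0; congr (_ + _).
by apply: eq_bigr => i _; rewrite /= /bump /=; congr 'C(_, _); lia.
Qed.

Lemma csum_pos s c : casc s c -> c != [::] -> 0 < csum s c.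
Proof.
case: c => [//|x c] h _; rewrite csum_cons; apply: ltn_addr.
by rewrite bin_gt0; exact: casc_head h.
Qed.

Lemma Epred_le s c z : sorted (fun a b => b < a) c -> Epred s c z -> z <= head 0 c.
Proof.
elim: c s => [//|x c IH] s /= srt.
case: c IH srt => [|y c] IH srt; first by case/andP=> _ /ltnW.
case/orP => [/eqP -> //|/(IH _ (path_sorted srt))] /=.
by move: srt => /= /andP[yx _] zy; apply: leq_trans zy (ltnW yx).
Qed.

Lemma last_le c : sorted (fun a b => b < a) c -> nth 0 c (size c).-1 <= head 0 c.
Proof.
elim: c => [//|x c IH] /= srt.
case: c IH srt => [//|y c] IH /= /andP[yx srt].
by apply: leq_trans (IH srt) (ltnW yx).
Qed.

Lemma Emin s c k : casc s c -> c != [::] ->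
  (forall z, Epred s c z -> k <= z) <-> k + s + 1 <= size c + nth 0 c (size c).-1.
Proof.
elim: c s => [//|x c IH] s h _.
have xs := casc_head h; have s0 := casc_s h.
case: c IH h => [|y c] IH h /=.
  split => [H|H z /andP[a b]]; last lia.
  have := H (x - s); rewrite leqnn /=; lia.
have ht := casc_tail h.
have IHc := IH _ ht isT.
have s1 : 1 < s by case: h => /= sz _ _; lia.
split => [H|H z].
  have : k + s.-1 + 1 <= (size c).+1 + nth 0 (y :: c) (size c).
    by apply/IHc => z hz; apply: H; apply/orP; right.
  lia.
case/orP => [/eqP ->|hz].
  case: h => /= sz /andP[yx srt] _.
  have hl := last_le (c := y :: c) srt; rewrite /= in hl.
  lia.
by move: z hz; apply/IHc; rewrite /=; lia.
Qed.

Lemma Ecard N s c : casc s c -> c != [::] -> (forall z, Epred s c z -> z < N) ->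
  #|Eset N s c| = s /\ rk s (Eset N s c) = csum s c - 1.
Proof.
elim: c s => [//|x c IH] s h _ HN.
have xs := casc_head h; have s0 := casc_s h.
case: c IH h HN => [|y c] IH h HN.
  have x1 : x - 1 < N by apply: HN; rewrite /=; lia.
  have := @rk_int N (x - s) s ltac:(lia).
  have -> : x - s + s = x by lia.
  have -> : [set z : 'I_N | x - s <= z < x] = Eset N s [:: x] by [].
  by rewrite /csum big_ord1 subn0.
have ht := casc_tail h.
have HN' : forall z, Epred s.-1 (y :: c) z -> z < N.
  by move=> z hz; apply: HN; apply/orP; right.
have [c1 r1] := IH _ ht isT HN'.
have xN : x < N by apply: HN; rewrite /= eqxx.
set xo : 'I_N := Ordinal xN.
have yx : y < x by case: h => _ /= /andP[].
have lt : forall z, Epred s.-1 (y :: c) z -> z < x.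
  move=> z hz; have := Epred_le (proj1 (proj2 (let: And3 a b c := ht in conj a (conj b c)))) hz.
  by rewrite /=; lia.
have E : Eset N s [:: x, y & c] = xo |: Eset N s.-1 (y :: c).
  apply/setP => z; rewrite !inE /=; congr (_ || _).
have xn : xo \notin Eset N s.-1 (y :: c).
  by rewrite inE; apply/negP => /lt; rewrite ltnn.
rewrite E cardsU1 xn c1; split; first lia.
rewrite (@rk_rec _ _ _ xo) //; last first.
  - move=> z; rewrite -E inE /= => /orP[/eqP -> //|/lt /ltnW //].
  - exact: setU11.
rewrite setU1K // r1 (csum_cons s x).
have := csum_pos ht isT.
rewrite /=; lia.
Qed.

Lemma edgeE N s m (A : {set 'I_N}) : colex_edge N s m A = (#|A| == s) && (rk s A < m).
Proof.
rewrite /colex_edge /rk; congr (_ && (_ < _)); apply: eq_card => B.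
by rewrite !inE colexE.
Qed.

Lemma key N s t m (E : {set 'I_N}) : #|E| = s -> rk s E = m ->
  kts N s t m < kts N s t m.+1 <->
  exists K : {set 'I_N}, [/\ #|K| = t, E \subset K &
     forall A : {set 'I_N}, A \subset K -> #|A| = s -> rk s A <= m].
Proof.
move=> cE rE; rewrite /kts.
set S1 := [set K : {set 'I_N} | _ && _].
set S2 := [set K : {set 'I_N} | _ && _].
have sub : S1 \subset S2.
  apply/subsetP => K; rewrite !inE => /andP[-> /forallP H]; apply/forallP => A.
  apply/implyP => h; have := implyP (H A) h; rewrite !edgeE => /andP[-> /=]; lia.
split.
  move=> lt.
  have : ~~ (S2 \subset S1) by apply: contraTN lt => h; rewrite -leqNgt subset_leq_card.
  case/subsetPn => K; rewrite !inE => /andP[/eqP cK /forallP H2].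
  rewrite cK eqxx /= => /forallPn [A]; rewrite negb_imply => /andP[/andP[AK cA] nA].
  have := implyP (H2 A) (introT andP (conj AK cA)); rewrite edgeE cA /= ltnS => le.
  rewrite edgeE cA /= -leqNgt in nA.
  have eA : A = E.
    apply: wt_inj; case: (ltngtP (wt A) (wt E)) => // h.
      have := rk_lt (eqP cA) h; lia.
    have := rk_lt cE h; lia.
  exists K; split => //; first by rewrite -eA.
  move=> B BK cB; have := implyP (H2 B) (introT andP (conj BK (introT eqP cB))).
  by rewrite edgeE cB eqxx /= ltnS.
case=> K [cK EK H].
apply: proper_card; apply/properP; split => //.
exists K.
  rewrite inE cK eqxx /=; apply/forallP => A; apply/implyP => /andP[AK /eqP cA].
  by rewrite edgeE cA eqxx /= ltnS H.
rewrite inE cK eqxx /= negb_forall; apply/existsP; exists E.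
by rewrite EK cE eqxx /= edgeE cE eqxx rE ltnn.
Qed.

Lemma top N s t (E : {set 'I_N}) : 0 < s < t -> #|E| = s ->
  (exists K : {set 'I_N}, [/\ #|K| = t, E \subset K &
     forall A : {set 'I_N}, A \subset K -> #|A| = s -> rk s A <= rk s E]) <->
  (forall z, z \in E -> t - s <= val z).
Proof.
move=> /andP[s0 st] cE; split.
  case=> K [cK EK H] z zE; rewrite leqNgt; apply/negP => zlt.
  have cD : #|K :\: E| = t - s by rewrite cardsD (setIidPr EK) cK cE.
  have [y yD zy] : exists2 y, y \in K :\: E & val z < val y.
    apply/exists_inP; apply: contraTT zlt => /exists_inPn Hn.
    rewrite -leqNgt -cD; apply: card_le_bound => y yD.
    have := Hn y yD; rewrite -leqNgt leq_eqVlt => /orP[/eqP e|//].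
    have e' : y = z by apply: val_inj.
    by move: yD; rewrite e' inE zE.
  move: yD; rewrite inE => /andP[yE yK].
  set A := y |: (E :\ z).
  have yn : y \notin E :\ z by rewrite inE (negbTE yE) andbF.
  have cA : #|A| = s by have := cardsD1 z E; rewrite zE cE /A cardsU1 yn /=; lia.
  have AK : A \subset K.
    apply/subsetP => w; rewrite !inE => /orP[/eqP -> //|/andP[_ wE]].
    exact: (subsetP EK).
  have := H A AK cA.
  have wl : wt E < wt A.
    rewrite (wtD1 zE) /A (wtD1 (setU11 y (E :\ z))) setU1K // ltn_add2r ltn_exp2l //.
  have := rk_lt cE wl; lia.
move=> Hz.
have [z0 z0E] : exists z0, z0 \in E.
  by apply/set0Pn; rewrite -card_gt0 cE.
have tsN : t - s <= N by exact: leq_trans (Hz _ z0E) (ltnW (ltn_ord z0)).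
set L := [set y : 'I_N | val y < t - s].
have EL : E :&: L = set0.
  apply/setP => y; rewrite !inE; apply/negP => /andP[/Hz a]; by rewrite ltnNge a.
exists (E :|: L); split.
- by rewrite cardsU EL cards0 cE card_low //; lia.
- exact: subsetUl.
move=> A AK cA; apply: rk_le.
case: (boolP (E \subset A)) => [EA|].
  have -> : A = E; last by [].
  by apply/eqP; rewrite eq_sym eqEcard EA cA cE leqnn.
case/subsetPn => z zE zA.
rewrite /wt (big_setID (A := A) E) (big_setID (A := E) A) /= setIC.
apply: ltnW; rewrite ltn_add2l.
apply: (@leq_trans (2 ^ z)); last first.
  by apply: (wt_ge (y := z) (A := E :\: A)); rewrite inE zE zA.
apply: (@leq_trans (2 ^ (t - s))); last by rewrite leq_exp2l // Hz.
apply: wt_lt => y; rewrite inE => /andP[yE yA].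
by have := subsetP AK y yA; rewrite !inE (negbTE yE).
Qed.
Unset Implicit Arguments. Set Strict Implicit.

Theorem mainTheorem10 (n s t m : nat) (c : seq nat) (N : nat) :
  1 <= s -> s < t -> t <= n -> 0 < m -> m < 'C(n, s) ->
  n <= N ->
  cascade_rep s m.+1 c ->
  (kts N s t m.+1 > kts N s t m) <->
  (t + 1 <= size c + nth 0 c (size c).-1).
Proof.
move=> s1 st tn m0 mn nN [sz srt Hn Hs].
have hc : casc s c by [].
have Hs' : m.+1 = csum s c by [].
have cne : c != [::] by case: c {hc Hs' sz srt Hn} Hs => //; rewrite big_ord0.
have HN : forall z, Epred s c z -> z < N.
  case: c hc Hs' cne {Hs sz srt Hn} => [//|x [|y c]] hc Hs' _ z.
    move=> /= /andP[_ zx].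
    have xn : x <= n.
      rewrite leqNgt; apply/negP => nx.
      move: Hs'; rewrite /csum big_ord1 subn0 /= => e.
      have h1 := leq_bin2l s nx.
      case: s s1 st e h1 mn hc => [//|s'] _ st e h1 mn' _.
      rewrite binS in h1.
      have : 0 < 'C(n, s') by rewrite bin_gt0; lia.
      lia.
    lia.
  move=> hz; have := Epred_le (let: And3 _ b _ := hc in b) hz; rewrite /= => zx.
  have xn : x < n.
    rewrite ltnNge; apply/negP => nx.
    have := leq_bin2l s nx.
    have := csum_pos (casc_tail hc) isT.
    move: Hs'; rewrite csum_cons; lia.
  lia.
have [cE rE] := Ecard hc cne HN.
rewrite -Hs' subn1 /= in rE.
have K1 := key t cE rE.
have T1 := top (s := s) (t := t) (introT andP (conj s1 st)) cE.
rewrite rE in T1.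
have M1 := Emin (t - s) hc cne.
have tr : (forall z : 'I_N, z \in Eset N s c -> t - s <= val z) <->
          (forall z, Epred s c z -> t - s <= z).
  split => H z.
    move=> hz; have zN := HN z hz.
    by have := H (Ordinal zN); rewrite inE; apply.
  by rewrite inE => /H.
have -> : t + 1 = t - s + s + 1 by lia.
rewrite -M1 -tr -T1 -K1.
by [].
Qed.
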